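(* Let $F=\langle f_1,\ldots,f_k\rangle$ be a normalized solution to an instance $(\mathcal{T}_{initial},\mathcal{T}_{final},k)$ of Flip Distance, and let $C$ be a component of $\mathcal{D}_F$. Let $f_i$ and $f_h$, with $i<h$, be two flips in $C$. If $\phi(f_i)=\epsilon(f_h)$, or if $\phi(f_i)$ and $\epsilon(f_h)$ share a triangle $T$ in $\mathcal{T}_j$ for some $j$ with $i\le j<h$, then there is a directed path from $f_i$ to $f_h$ in $C$.
   Context: A triangulation of a finite point set $\mathcal{P}$ in the plane is a partition of the convex hull of $\mathcal{P}$ into triangles whose vertex set is $\mathcal{P}$. For an interior edge $e$ of a triangulation $\mathcal{T}$, the quadrilateral associated with $e$ is the union of the two triangles of $\mathcal{T}$ sharing $e$. A flip $f$ with underlying edge $\epsilon(f)=e$ is admissible in $\mathcal{T}$ if $e\in\mathcal{T}$ and its associated quadrilateral is convex; performing it replaces $e$ by the other diagonal $\phi(f)$ of that quadrilateral. Two distinct edges share a triangle in $\mathcal{T}$ if they are edges of the same triangle of $\mathcal{T}$. A sequence $F=\langle f_1,\ldots,f_r\rangle$ is valid with respect to $\mathcal{T}$ if there are triangulations $\mathcal{T}_0=\mathcal{T},\mathcal{T}_1,\ldots,\mathcal{T}_r$ such that $f_i$ is admissible in $\mathcal{T}_{i-1}$ and performing it yields $\mathcal{T}_i$; then we write $\mathcal{T}\xrightarrow{F}\mathcal{T}_r$. Flips in a sequence are distinct objects even if they have the same underlying edge. For $1\le i<j\le r$, flip $f_j$ is adjacent to $f_i$ (written $f_i\to f_j$)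 if (1) either $\phi(f_i)=\epsilon(f_j)$ or $\phi(f_i)$ and $\epsilon(f_j)$ share a triangle in $\mathcal{T}_{j-1}$, and (2) there is no $p$ with $i<p<j$ and $\epsilon(f_p)=\phi(f_i)$. $\mathcal{D}_F$ is the directed acyclic graph whose nodes are the flips of $F$ and whose arcs are the pairs $f_i\to f_j$; a component of it is a weakly connected component. The flip distance between two triangulations is the minimum length of a valid sequence transforming one into the other. An instance $(\mathcal{T}_{initial},\mathcal{T}_{final},k)$ of Flip Distance consists of two triangulations of $\mathcal{P}$ and $k\in\mathbb{N}$; a solution is a valid sequence $F$ of length $k$ with $\mathcal{T}_{initial}\xrightarrow{F}\mathcal{T}_{final}$, where $k$ is the flip distance between them. For a solution $F=\langle f_1,\ldots,f_k\rangle$, $\mathcal{T}_j$ denotes the outcome of applying $\langle f_1,\ldots,f_j\rangle$ to $\mathcal{T}_{initial}$. A changed edge is an edge of $\mathcal{T}_{initial}$ not in $\mathcal{T}_{final}$; a component of $\mathcal{D}_F$ is essential if it contains a flip whose underlying edge is a changed edge. A solution $F$ is normalized if every component of $\mathcal{D}_F$ is essential and the flips of each component of $\mathcal{D}_F$ appear as a consecutive block in $F$. *)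

(* Defs.v *)
From HB Require Import structures.
From mathcomp Require Import all_boot all_order all_algebra.
From mathcomp Require Import reals.
Set Implicit Arguments. Unset Strict Implicit. Unset Printing Implicit Defensive.
Import Order.TTheory GRing.Theory Num.Theory.
Local Open Scope ring_scope.

Section Geometry.
Variables (R : realType) (n : nat) (p : 'I_n -> 'rV[R]_2).

Definition in_hull (S : {set 'I_n}) (x : 'rV[R]_2) : Prop :=
  exists w : 'I_n -> R,
    [/\ forall i, 0 <= w i, forall i, i \notin S -> w i = 0,
        \sum_(i < n) w i = 1 & \sum_(i < n) w i *: p i = x].

Definition in_open_simplex (S : {set 'I_n}) (x : 'rV[R]_2) : Prop :=
  exists w : 'I_n -> R,
    [/\ forall i, i \in S -> 0 < w i, forall i, i \notin S -> w i = 0,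
        \sum_(i < n) w i = 1 & \sum_(i < n) w i *: p i = x].

Definition aff_indep (S : {set 'I_n}) : Prop :=
  forall w : 'I_n -> R, (forall i, i \notin S -> w i = 0) ->
    \sum_(i < n) w i = 0 -> \sum_(i < n) w i *: p i = 0 -> forall i, w i = 0.

Definition convex_set (A : 'rV[R]_2 -> Prop) : Prop :=
  forall x y, A x -> A y -> forall t : R, 0 <= t <= 1 ->
    A (t *: x + (1 - t) *: y).

Definition is_triangulation (T : {set {set 'I_n}}) : Prop :=
  [/\
      forall t, t \in T -> #|t| = 3 /\ aff_indep t,
      forall i, exists2 t, t \in T & i \in t,
      forall t i, t \in T -> i \notin t -> ~ in_hull t (p i),
      forall t1 t2 x, t1 \in T -> t2 \in T -> t1 != t2 ->
        in_open_simplex t1 x -> in_open_simplex t2 x -> False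
    &
      forall x, in_hull setT x <-> exists2 t, t \in T & in_hull t x].

(* A flip is recorded by the pair (underlying edge epsilon, new edge phi). *)
Definition flip := ({set 'I_n} * {set 'I_n})%type.
Definition eps (f : flip) := f.1.
Definition phi (f : flip) := f.2.

Definition flip_step (T : {set {set 'I_n}}) (f : flip) (T' : {set {set 'I_n}})
  : Prop :=
  exists a b c d : 'I_n,
    [/\ a != b, c != d, eps f = [set a; b] & phi f = [set c; d]] /\
    [/\ c \notin [set a; b], d \notin [set a; b],
         [set a; b; c] \in T & [set a; b; d] \in T] /\
    convex_set (fun x => in_hull [set a; b; c] x \/ in_hull [set a; b; d] x) /\
    T' = ((T :\ [set a; b; c]) :\ [set a; b; d])
           :|: [set [set a; c; d]; [set b; c; d]].

Definition dflip : flip := (set0, set0).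

(* Ts i = triangulation after the first i flips of F *)
Definition valid_seq (T : {set {set 'I_n}}) (F : seq flip)
  (Ts : nat -> {set {set 'I_n}}) : Prop :=
  [/\ Ts 0%N = T,
      forall i, (i <= size F)%N -> is_triangulation (Ts i)
    & forall i, (i < size F)%N -> flip_step (Ts i) (nth dflip F i) (Ts i.+1)].

Definition is_edge (T : {set {set 'I_n}}) (e : {set 'I_n}) : bool :=
  (#|e| == 2)%N && [exists t in T, e \subset t].

Definition share_triangle (T : {set {set 'I_n}}) (e1 e2 : {set 'I_n}) : bool :=
  [&& e1 != e2, (#|e1| == 2)%N, (#|e2| == 2)%N &
      [exists t in T, (e1 \subset t) && (e2 \subset t)]].

(* Arcs of D_F (0-based indices; flip a is applied to Ts a) *)
Definition adj (F : seq flip) (Ts : nat -> {set {set 'I_n}})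
  (a b : 'I_(size F)) : bool :=
  [&& (a < b)%N,
      (phi (nth dflip F a) == eps (nth dflip F b))
        || share_triangle (Ts b) (phi (nth dflip F a)) (eps (nth dflip F b))
    & [forall q : 'I_(size F),
        ~~ (((a < q < b)%N) && (eps (nth dflip F q) == phi (nth dflip F a)))]].

Arguments adj : clear implicits.

Definition wadj (F : seq flip) (Ts : nat -> {set {set 'I_n}}) (a b : 'I_(size F)) : bool := adj F Ts a b || adj F Ts b a.

Arguments wadj : clear implicits.

Definition is_component (F : seq flip) (Ts : nat -> {set {set 'I_n}}) (C : {set 'I_(size F)}) : Prop :=
  exists x0, C = [set x | connect (wadj F Ts) x0 x].

Arguments is_component : clear implicits.

Definition changed_edge (Tinit Tfinal : {set {set 'I_n}}) (e : {set 'I_n}) :=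
  is_edge Tinit e && ~~ is_edge Tfinal e.

Definition solution (Tinit Tfinal : {set {set 'I_n}}) (k : nat)
  (F : seq flip) (Ts : nat -> {set {set 'I_n}}) : Prop :=
  [/\ valid_seq Tinit F Ts, Ts (size F) = Tfinal, size F = k &
      forall F' Ts', valid_seq Tinit F' Ts' -> Ts' (size F') = Tfinal ->
        (k <= size F')%N].

Definition normalized_solution (Tinit Tfinal : {set {set 'I_n}}) (k : nat)
  (F : seq flip) (Ts : nat -> {set {set 'I_n}}) : Prop :=
  solution Tinit Tfinal k F Ts /\
  forall C, is_component F Ts C ->
    (exists2 x, x \in C & changed_edge Tinit Tfinal (eps (nth dflip F x))) /\
    (forall x y z : 'I_(size F), (x <= y <= z)%N -> x \in C -> z \in C -> y \in C).

End Geometry.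
Arguments adj {n} F Ts a b.
Arguments wadj {n} F Ts a b.
Arguments is_component {n} F Ts C.

(* Main.v *)
Require Import Defs.
From HB Require Import structures.
From mathcomp Require Import all_boot all_order all_algebra.
From mathcomp Require Import reals.
From mathcomp Require Import ring lra.
Set Implicit Arguments. Unset Strict Implicit. Unset Printing Implicit Defensive.
Import Order.TTheory GRing.Theory Num.Theory.

Section Geo.
Local Open Scope ring_scope.
Variables (R : realType) (n : nat) (p : 'I_n -> 'rV[R]_2).
Hypothesis Hp : injective p.

Lemma rv2P (a b : 'rV[R]_2) : a 0 0 = b 0 0 -> a 0 1 = b 0 1 -> a = b.
Proof.
move=> h0 h1; apply/rowP => -[[|[|k]] Hk] //.
- by have -> : Ordinal Hk = 0 by apply: val_inj.
- by have -> : Ordinal Hk = 1 by apply: val_inj.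
Qed.

Lemma sum3 (V : nmodType) (G : 'I_n -> V) u v w :
  u != v -> u != w -> v != w ->
  (forall i, i \notin [set u; v; w] -> G i = 0) ->
  \sum_(i < n) G i = G u + G v + G w.
Proof.
move=> uv uw vw H.
rewrite (bigD1 u) //= (bigD1 v) /=; last by rewrite eq_sym uv.
rewrite (bigD1 w) /=; last by rewrite eq_sym uw eq_sym vw.
rewrite big1 ?addr0 ?addrA // => i /andP[/andP[iu iv] iw].
by apply: H; rewrite !inE (negbTE iu) (negbTE iv) (negbTE iw).
Qed.

Lemma coordE (W : 'I_n -> R) (j : 'I_2) :
  (\sum_(i < n) W i *: p i) 0 j = \sum_(i < n) W i * p i 0 j.
Proof. by rewrite summxE; apply: eq_bigr => i _; rewrite mxE. Qed.

Lemma hull3 S (u v w : 'I_n) (W : 'I_n -> R) (y : 'rV[R]_2) :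
  S = [set u; v; w] -> u != v -> u != w -> v != w ->
  (forall i, i \notin S -> W i = 0) ->
  \sum_(i < n) W i = 1 -> \sum_(i < n) W i *: p i = y ->
  [/\ W u + W v + W w = 1,
      y 0 0 = W u * p u 0 0 + W v * p v 0 0 + W w * p w 0 0 &
      y 0 1 = W u * p u 0 1 + W v * p v 0 1 + W w * p w 0 1].
Proof.
move=> -> uv uw vw H1 H2 H3; split.
- by rewrite -H2 (sum3 uv uw vw).
- rewrite -H3 coordE (sum3 uv uw vw) // => i /H1 ->; exact: mul0r.
- rewrite -H3 coordE (sum3 uv uw vw) // => i /H1 ->; exact: mul0r.
Qed.

Lemma mk_open3 (u v w : 'I_n) (a b c : R) (y : 'rV[R]_2) :
  u != v -> u != w -> v != w -> 0 < a -> 0 < b -> 0 < c -> a + b + c = 1 ->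
  y 0 0 = a * p u 0 0 + b * p v 0 0 + c * p w 0 0 ->
  y 0 1 = a * p u 0 1 + b * p v 0 1 + c * p w 0 1 ->
  in_open_simplex p [set u; v; w] y.
Proof.
move=> uv uw vw a0 b0 c0 s1 e0 e1.
pose W i := if i == u then a else if i == v then b else if i == w then c else 0.
have Wz : forall i, i \notin [set u; v; w] -> W i = 0.
  by move=> i; rewrite !inE /W; do 3!case: eqP.
have Wu : W u = a by rewrite /W eqxx.
have Wv : W v = b by rewrite /W eqxx eq_sym (negbTE uv).
have Ww : W w = c by rewrite /W eqxx eq_sym (negbTE uw) eq_sym (negbTE vw).
exists W; split => //.
- move=> i; rewrite !inE; case: (eqVneq i u) => [->|?]; first by rewrite Wu.
  case: (eqVneq i v) => [->|?]; first by rewrite Wv.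
  case: (eqVneq i w) => [->|?]; first by rewrite Ww. by [].
- by rewrite (sum3 uv uw vw) // Wu Wv Ww.
- apply: rv2P; rewrite coordE (sum3 uv uw vw) ?Wu ?Wv ?Ww //;
    by move=> i /Wz ->; rewrite mul0r.
Qed.


Definition sd (u v x : 'I_n) := (p v 0 0 - p u 0 0) * (p x 0 1 - p u 0 1)
  - (p v 0 1 - p u 0 1) * (p x 0 0 - p u 0 0).
Definition gen (y : 'rV[R]_2) := forall k l : 'I_n, k != l ->
  (p l 0 0 - p k 0 0) * (y 0 1 - p k 0 1) - (p l 0 1 - p k 0 1) * (y 0 0 - p k 0 0) != 0.

Lemma gen_w0 (y : 'rV[R]_2) (u v w : 'I_n) (a b c : R) : gen y -> v != w ->
  a + b + c = 1 ->
  y 0 0 = a * p u 0 0 + b * p v 0 0 + c * p w 0 0 ->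
  y 0 1 = a * p u 0 1 + b * p v 0 1 + c * p w 0 1 -> a != 0.
Proof.
move=> g vw s e0 e1; apply/eqP => a0; move: (g v w vw); rewrite e0 e1 a0.
have -> : b = 1 - c by rewrite -s a0; ring.
by apply/negP; rewrite negbK; apply/eqP; ring.
Qed.

Lemma gen_open (y : 'rV[R]_2) (u v w : 'I_n) : gen y ->
  u != v -> u != w -> v != w ->
  in_hull p [set u; v; w] y -> in_open_simplex p [set u; v; w] y.
Proof.
move=> g uv uw vw [W [W0 Wz W1 Wy]].
have [s e0 e1] := hull3 (erefl _) uv uw vw Wz W1 Wy.
exists W; split => // i; rewrite !inE => Hi; rewrite lt0r W0 andbT.
case: (eqVneq i u) Hi => [->|iu] Hi.
  by apply: (gen_w0 g vw s e0 e1).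
case: (eqVneq i v) Hi => [->|iv] Hi.
  apply: (gen_w0 (u:=v) (v:=u) (w:=w) (b:=W u) (c:=W w) g uw); first lra.
    by rewrite e0; lra. by rewrite e1; lra.
case: (eqVneq i w) Hi => [->|iw] Hi; last by [].
apply: (gen_w0 (u:=w) (v:=u) (w:=v) (b:=W u) (c:=W v) g uv); first lra.
  by rewrite e0; lra. by rewrite e1; lra.
Qed.

Lemma open_hull S (y : 'rV[R]_2) : in_open_simplex p S y -> in_hull p S y.
Proof.
case=> W [Wp Wz W1 Wy]; exists W; split => // i.
by case: (boolP (i \in S)) => [/Wp/ltW|/Wz ->].
Qed.

Lemma hull_T S (y : 'rV[R]_2) : in_hull p S y -> in_hull p setT y.
Proof. by case=> W [W0 Wz W1 Wy]; exists W; split => // i; rewrite inE. Qed.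

Lemma aff_sd (u v x : 'I_n) : u != v -> x != u -> x != v ->
  aff_indep p [set u; v; x] -> sd u v x != 0.
Proof.
move=> uv xu xv H; apply/eqP => s0.
pose D0 := p v 0 0 - p u 0 0; pose D1 := p v 0 1 - p u 0 1.
pose A0 := p x 0 0 - p u 0 0; pose A1 := p x 0 1 - p u 0 1.
pose dd := D0 * D0 + D1 * D1; pose xd := A0 * D0 + A1 * D1.
have ux : u != x by rewrite eq_sym.
have vx : v != x by rewrite eq_sym.
pose W i := if i == u then xd - dd else if i == v then - xd else if i == x then dd else 0.
have Wz : forall i, i \notin [set u; v; x] -> W i = 0.
  by move=> i; rewrite !inE /W; do 3!case: eqP.
have Wu : W u = xd - dd by rewrite /W eqxx.
have Wv : W v = - xd by rewrite /W eqxx eq_sym (negbTE uv).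
have Wx : W x = dd by rewrite /W eqxx (negbTE xu) (negbTE xv).
have sdE : D0 * A1 - D1 * A0 = 0 by rewrite -s0.
have Hs : \sum_(i < n) W i = 0 by rewrite (sum3 uv ux vx) // Wu Wv Wx; ring.
have Hv : \sum_(i < n) W i *: p i = 0.
  apply: rv2P; rewrite coordE (sum3 uv ux vx) ?Wu ?Wv ?Wx ?mxE;
    try by move=> i /Wz ->; rewrite mul0r.
  - transitivity (- D1 * (D0 * A1 - D1 * A0)); first by rewrite /xd /dd /A0 /A1 /D0 /D1; ring.
    by rewrite sdE mulr0.
  - transitivity (D0 * (D0 * A1 - D1 * A0)); first by rewrite /xd /dd /A0 /A1 /D0 /D1; ring.
    by rewrite sdE mulr0.
have := H W Wz Hs Hv x; rewrite Wx.
move=> Wx0.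
have dd0 : dd = 0 by rewrite -Wx0.
have : D0 = 0 /\ D1 = 0.
  have h0 : 0 <= D0 * D0 by rewrite -expr2 sqr_ge0.
  have h1 : 0 <= D1 * D1 by rewrite -expr2 sqr_ge0.
  have e0 : D0 * D0 = 0 by move: dd0; rewrite /dd; lra.
  have e1 : D1 * D1 = 0 by move: dd0; rewrite /dd; lra.
  by move/eqP: e0; rewrite mulf_eq0 orbb => /eqP; move/eqP: e1; rewrite mulf_eq0 orbb => /eqP.
case=> d0 d1; move/negP: uv; apply; apply/eqP; apply: Hp; apply: rv2P.
  by move: d0; rewrite /D0; move/eqP; rewrite subr_eq0 => /eqP.
by move: d1; rewrite /D1; move/eqP; rewrite subr_eq0 => /eqP.
Qed.

Lemma avoid (N : nat) (c : 'I_N -> R) (K : finType) (f : K -> R) :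
  injective c -> (#|K| < N)%N -> exists m, forall k, c m != f k.
Proof.
move=> ci hK.
case: (boolP [exists m, [forall k, c m != f k]]) => [/existsP[m /forallP Hm]|H].
  by exists m.
have ex : forall m, exists k, c m == f k.
  move=> m; move: H; rewrite negb_exists => /forallP/(_ m).
  by rewrite negb_forall => /existsP[k]; rewrite negbK => e; exists k.
pose g m := xchoose (ex m).
have gi : injective g.
  move=> m1 m2 e; apply: ci.
  rewrite (eqP (xchooseP (ex m1))) (eqP (xchooseP (ex m2))).
  by move: e; rewrite /g => ->.
by have := leq_card g gi; rewrite card_ord => /(leq_trans hK); rewrite ltnn.
Qed.


Lemma cram0 (U0 D0 D1 A0 A1 B0 B1 t e : R) : D0 * B1 - D1 * B0 != 0 ->
  U0 + D0 / 2 + t * (A0 + e * D0) =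
  (1 / 2 - t * ((A0 * B1 - A1 * B0) / (D0 * B1 - D1 * B0)) - t * e
     - t * ((D0 * A1 - D1 * A0) / (D0 * B1 - D1 * B0))) * U0
  + (1 / 2 + t * ((A0 * B1 - A1 * B0) / (D0 * B1 - D1 * B0)) + t * e) * (D0 + U0)
  + t * ((D0 * A1 - D1 * A0) / (D0 * B1 - D1 * B0)) * (B0 + U0).
Proof. by move=> h; field. Qed.

Lemma cram1 (U1 D0 D1 A0 A1 B0 B1 t e : R) : D0 * B1 - D1 * B0 != 0 ->
  U1 + D1 / 2 + t * (A1 + e * D1) =
  (1 / 2 - t * ((A0 * B1 - A1 * B0) / (D0 * B1 - D1 * B0)) - t * e
     - t * ((D0 * A1 - D1 * A0) / (D0 * B1 - D1 * B0))) * U1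
  + (1 / 2 + t * ((A0 * B1 - A1 * B0) / (D0 * B1 - D1 * B0)) + t * e) * (D1 + U1)
  + t * ((D0 * A1 - D1 * A0) / (D0 * B1 - D1 * B0)) * (B1 + U1).
Proof. by move=> h; field. Qed.

Lemma Kpt (u v x z : 'I_n) : u != v -> x != u -> x != v -> z != u -> z != v ->
  0 < sd u v x * sd u v z ->
  exists y, [/\ gen y, in_open_simplex p [set u; v; x] y
                     & in_open_simplex p [set u; v; z] y].
Proof.
move=> uv xu xv zu zv hs.
set D0 := p v 0 0 - p u 0 0; set D1 := p v 0 1 - p u 0 1.
set A0 := p x 0 0 - p u 0 0; set A1 := p x 0 1 - p u 0 1.
set B0 := p z 0 0 - p u 0 0; set B1 := p z 0 1 - p u 0 1.
have sAE : sd u v x = D0 * A1 - D1 * A0 by [].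
have sBE : sd u v z = D0 * B1 - D1 * B0 by [].
set sA := sd u v x in hs sAE; set sB := sd u v z in hs sBE.
have sA0 : sA != 0 by apply/eqP => e; move: hs; rewrite e mul0r ltxx.
have sB0 : sB != 0 by apply/eqP => e; move: hs; rewrite e mulr0 ltxx.
pose N := (n * n).+1.
have cardK : (#|{: 'I_n * 'I_n}| < N)%N by rewrite card_prod card_ord.
have N0 : (N%:R : R) != 0 by rewrite pnatr_eq0.
pose L0 (kl : 'I_n * 'I_n) := p kl.2 0 0 - p kl.1 0 0.
pose L1 (kl : 'I_n * 'I_n) := p kl.2 0 1 - p kl.1 0 1.
pose f1 kl := - (L0 kl * A1 - L1 kl * A0) / (L0 kl * D1 - L1 kl * D0).
pose c1 (m : 'I_N) := (m%:R / N%:R : R).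
have c1i : injective c1.
  move=> m1 m2; rewrite /c1 => /(mulIf (invr_neq0 N0)) /eqP.
  by rewrite eqr_nat => /eqP; apply: val_inj.
have [m1 Hm1] := @avoid _ c1 _ f1 c1i cardK.
set eps := c1 m1.
have eps0 : 0 <= eps by rewrite /eps /c1 divr_ge0 // ler0n.
have eps1 : eps <= 1.
  by rewrite /eps /c1 ler_pdivrMr ?ltr0n // mul1r ler_nat ltnW.
pose w0 := A0 + eps * D0; pose w1 := A1 + eps * D1.
have Cw : forall k l : 'I_n, k != l ->
    (p l 0 0 - p k 0 0) * w1 - (p l 0 1 - p k 0 1) * w0 != 0.
  move=> k l kl; have := Hm1 (k, l); rewrite /f1 /L0 /L1 /=.
  set a := _ * A1 - _; set b := _ * D1 - _.
  have -> : (p l 0 0 - p k 0 0) * w1 - (p l 0 1 - p k 0 1) * w0 = a + eps * b.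
    by rewrite /a /b /w0 /w1; ring.
  case: (eqVneq b 0) => [b0|bn] He.
    rewrite b0 mulr0 addr0; apply/eqP => a0.
    have e1 : (p l 0 0 - p k 0 0) * sA = 0.
      transitivity (D0 * a - A0 * b); first by rewrite sAE /a /b; ring.
      by rewrite a0 b0; ring.
    have e2 : (p l 0 1 - p k 0 1) * sA = 0.
      transitivity (D1 * a - A1 * b); first by rewrite sAE /a /b; ring.
      by rewrite a0 b0; ring.
    move/eqP: e1; rewrite mulf_eq0 (negbTE sA0) orbF subr_eq0 => /eqP e1.
    move/eqP: e2; rewrite mulf_eq0 (negbTE sA0) orbF subr_eq0 => /eqP e2.
    by move/negP: kl; apply; apply/eqP; apply: Hp; apply: rv2P.
  apply/eqP => e; move/eqP: He; apply.
  by apply/eqP; rewrite eq_sym; apply/eqP; apply: (mulIf bn); rewrite divfK // -/eps; lra.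
set r1 := (A0 * B1 - A1 * B0) / sB; set r2 := sA / sB.
have r2p : 0 < r2.
  have -> : r2 = (sA * sB) / (sB * sB) by rewrite /r2 -mulf_div divff // mulr1.
  by rewrite divr_gt0 // -expr2 exprn_even_gt0.
set M := `|r1| + r2 + 1.
have M1 : 1 <= M by rewrite /M; have := normr_ge0 r1; lra.
have M0 : 0 < M by lra.
set t0 := 1 / (8 * M).
have t00 : 0 < t0 by rewrite /t0 divr_gt0 // mulr_gt0.
pose Y0 := p u 0 0 + D0 / 2; pose Y1 := p u 0 1 + D1 / 2.
pose f2 (kl : 'I_n * 'I_n) := - (L0 kl * (Y1 - p kl.1 0 1) - L1 kl * (Y0 - p kl.1 0 0))
   / (L0 kl * w1 - L1 kl * w0).
pose c2 (m : 'I_N) := t0 * ((m%:R + 1) / (N%:R + 1)).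
have N1 : (N%:R + 1 : R) != 0 by rewrite natr1 pnatr_eq0.
have c2i : injective c2.
  move=> m3 m4; rewrite /c2 => /(mulfI (lt0r_neq0 t00)) /(mulIf (invr_neq0 N1)).
  move/(addIr 1)/eqP; rewrite eqr_nat => /eqP; apply: val_inj.
have [m2 Hm2] := @avoid _ c2 _ f2 c2i cardK.
set t := c2 m2.
have tp : 0 < t by rewrite /t /c2 mulr_gt0 // divr_gt0 // ?ltr_wpDl // ?ler0n // ltr01.
have tt0 : t < t0.
  rewrite /t /c2 -{2}(mulr1 t0) ltr_pM2l // ltr_pdivrMr; last by rewrite natr1 ltr0n.
  by rewrite mul1r ltrD2r ltr_nat.
have tM : t * M < 1 / 8.
  move: tt0; rewrite /t0 ltr_pdivlMr ?mulr_gt0 // => h.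
  by rewrite ltr_pdivlMr //; lra.
pose y : 'rV[R]_2 := p u + (1/2) *: (p v - p u) + t *: ((p x - p u) + eps *: (p v - p u)).
have y0 : y 0 0 = Y0 + t * w0 by rewrite /y !mxE /Y0 /w0 /D0 /A0; ring.
have y1 : y 0 1 = Y1 + t * w1 by rewrite /y !mxE /Y1 /w1 /D1 /A1; ring.
exists y; split.
- move=> k l kl; rewrite y0 y1.
  have := Hm2 (k, l); rewrite /f2 /L0 /L1 /= -/t.
  set c0 := _ * (Y1 - _) - _; set cc := _ * w1 - _ * w0.
  have ccn : cc != 0 by apply: Cw.
  have -> : (p l 0 0 - p k 0 0) * (Y1 + t * w1 - p k 0 1) -
     (p l 0 1 - p k 0 1) * (Y0 + t * w0 - p k 0 0) = c0 + t * cc.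
    by rewrite /c0 /cc; ring.
  move=> He; apply/eqP => e; move/eqP: He; apply.
  symmetry; apply: (mulIf ccn); rewrite divfK //; lra.
- have h1 : t * eps <= t by rewrite -{2}(mulr1 t) ler_wpM2l // ltW.
  have h2 : 0 <= t * eps by rewrite mulr_ge0 // ltW.
  have h3 : t <= t * M by rewrite -{1}(mulr1 t) ler_wpM2l // ltW.
  apply: (mk_open3 (a := 1/2 - t - t * eps) (b := 1/2 + t * eps) (c := t)).
  + by []. + by rewrite eq_sym. + by rewrite eq_sym.
  + lra. + lra. + lra. + lra.
  + rewrite y0 /Y0 /w0 /D0 /A0; field => //.
  + rewrite y1 /Y1 /w1 /D1 /A1; field => //.
- have h1 : t * eps <= t by rewrite -{2}(mulr1 t) ler_wpM2l // ltW.
  have h2 : 0 <= t * eps by rewrite mulr_ge0 // ltW.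
  have h4 : t * M = t * `|r1| + t * r2 + t by rewrite /M; ring.
  have h5 : t * r1 <= t * `|r1| by apply: ler_wpM2l; [exact: ltW | exact: ler_norm].
  have h6 : - (t * `|r1|) <= t * r1.
    by rewrite -mulrN; apply: ler_wpM2l; [exact: ltW | rewrite lerNl -normrN; exact: ler_norm].
  have h7 : 0 < t * r2 by rewrite mulr_gt0.
  apply: (mk_open3 (a := 1/2 - t * r1 - t * eps - t * r2)
                   (b := 1/2 + t * r1 + t * eps) (c := t * r2)).
  + by []. + by rewrite eq_sym. + by rewrite eq_sym.
  + lra. + lra. + lra. + lra.
  + rewrite y0 /Y0 /w0 /r1 /r2 sAE sBE.
    have -> : p z 0 0 = B0 + p u 0 0 by rewrite /B0; ring.
    have -> : p v 0 0 = D0 + p u 0 0 by rewrite /D0; ring.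
    by apply: cram0; rewrite -sBE.
  + rewrite y1 /Y1 /w1 /r1 /r2 sAE sBE.
    have -> : p z 0 1 = B1 + p u 0 1 by rewrite /B1; ring.
    have -> : p v 0 1 = D1 + p u 0 1 by rewrite /D1; ring.
    by apply: cram1; rewrite -sBE.
Qed.


Lemma tri3 (t : {set 'I_n}) (u v : 'I_n) : #|t| = 3%N -> u \in t -> v \in t -> u != v ->
  exists x, [/\ x != u, x != v & t = [set u; v; x]].
Proof.
move=> ht ut vt uv.
have E : t :&: [set u; v] = [set u; v].
  by apply/setIidPr; apply/subsetP => w; rewrite !inE => /orP[]/eqP->.
have : #|t :\: [set u; v]| == 1%N by rewrite cardsD E cards2 uv ht.
case/cards1P => x Ex.
have : x \in t :\: [set u; v] by rewrite Ex set11.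
rewrite !inE negb_or => /andP[/andP[xu xv] _].
by exists x; split => //; rewrite -(setID t [set u; v]) E Ex.
Qed.

Lemma tri_all (t : {set 'I_n}) : #|t| = 3%N ->
  exists u v x, [/\ u != v, x != u, x != v & t = [set u; v; x]].
Proof.
move=> ht.
have : (0 < #|t|)%N by rewrite ht.
case/card_gt0P => u ut.
have h2 : #|t :\ u| = 2%N by move: ht; rewrite (cardsD1 u t) ut add1n => -[].
have : (0 < #|t :\ u|)%N by rewrite h2.
case/card_gt0P => v; rewrite !inE => /andP[vu vt].
have uv : u != v by rewrite eq_sym.
have [x [xu xv ->]] := tri3 ht ut vt uv.
by exists u, v, x.
Qed.

Lemma pig3 (a b c : R) : a != 0 -> b != 0 -> c != 0 ->
  [|| 0 < a * b, 0 < a * c | 0 < b * c].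
Proof.
move=> ha hb hc; apply/negPn/negP; rewrite !negb_or -!leNgt => /andP[h1 /andP[h2 h3]].
have h4 : 0 <= (a * b) * (a * c) by apply: mulr_le0.
have h5 : (a * b) * (a * c) * (b * c) <= 0 by apply: mulr_ge0_le0.
have h6 : 0 < (a * b * c) ^+ 2 by rewrite exprn_even_gt0 //= !mulf_neq0.
have e : (a * b) * (a * c) * (b * c) = (a * b * c) ^+ 2 by ring.
by move: h5; rewrite e leNgt h6.
Qed.

Lemma set3_neq (u v x1 x2 : 'I_n) : x1 != u -> x1 != v -> x1 != x2 ->
  [set u; v; x1] != [set u; v; x2].
Proof.
move=> h1 h2 h3; apply/eqP => e.
have : x1 \in [set u; v; x2] by rewrite -e !inE eqxx !orbT.
by rewrite !inE (negbTE h1) (negbTE h2) (negbTE h3).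
Qed.

Lemma pick_point (T : {set {set 'I_n}}) (u v x1 x2 z : 'I_n) :
  is_triangulation p T -> u != v -> x1 != x2 ->
  x1 != u -> x1 != v -> x2 != u -> x2 != v -> z != u -> z != v ->
  [set u; v; x1] \in T -> [set u; v; x2] \in T -> sd u v z != 0 ->
  exists y, [/\ gen y, in_open_simplex p [set u; v; z] y &
     in_open_simplex p [set u; v; x1] y \/ in_open_simplex p [set u; v; x2] y].
Proof.
move=> [H1 _ _ H4 _] uv x12 x1u x1v x2u x2v zu zv T1 T2 sz.
have s1 : sd u v x1 != 0 by apply: aff_sd => //; case: (H1 _ T1).
have s2 : sd u v x2 != 0 by apply: aff_sd => //; case: (H1 _ T2).
case/or3P: (pig3 s1 s2 sz) => hp.
- have [y [_ o1 o2]] := Kpt uv x1u x1v x2u x2v hp.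
  by case: (H4 _ _ y T1 T2 (set3_neq x1u x1v x12) o1 o2).
- rewrite mulrC in hp; have [y [g o1 o2]] := Kpt uv zu zv x1u x1v hp.
  by exists y; split => //; left.
- rewrite mulrC in hp; have [y [g o1 o2]] := Kpt uv zu zv x2u x2v hp.
  by exists y; split => //; right.
Qed.

Lemma edge_two (T : {set {set 'I_n}}) (a b c d : 'I_n) (D : {set 'I_n}) :
  is_triangulation p T -> a != b -> c != d -> c != a -> c != b -> d != a -> d != b ->
  [set a; b; c] \in T -> [set a; b; d] \in T -> D \in T -> a \in D -> b \in D ->
  D = [set a; b; c] \/ D = [set a; b; d].
Proof.
move=> HT ab cd ca cb da db Tc Td TD aD bD.
have [H1 _ _ H4 _] := HT.
have [x [xa xb ED]] := tri3 (proj1 (H1 _ TD)) aD bD ab.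
case: (eqVneq x c) => [xc|xc]; first by left; rewrite ED xc.
case: (eqVneq x d) => [xd|xd]; first by right; rewrite ED xd.
have sx : sd a b x != 0 by apply: aff_sd => //; rewrite -ED; case: (H1 _ TD).
have [y [_ oy [o1|o2]]] := pick_point HT ab cd ca cb da db xa xb Tc Td sx.
- rewrite -ED in oy; case: (H4 _ _ y TD Tc _ oy o1) => //.
  by rewrite ED eq_sym set3_neq // eq_sym.
- rewrite -ED in oy; case: (H4 _ _ y TD Td _ oy o2) => //.
  by rewrite ED eq_sym set3_neq // eq_sym.
Qed.


Lemma set3C1 (a b c : 'I_n) : [set a; b; c] = [set b; c; a].
Proof.
by apply/setP => w; rewrite !inE; case: (w == a); case: (w == b); case: (w == c).
Qed.

Lemma tri_uniq (T : {set {set 'I_n}}) D1 D2 y : is_triangulation p T ->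
  D1 \in T -> D2 \in T -> in_open_simplex p D1 y -> in_open_simplex p D2 y -> D1 = D2.
Proof.
move=> [_ _ _ H4 _] T1 T2 o1 o2; case: (eqVneq D1 D2) => // ne.
by case: (H4 _ _ _ T1 T2 ne o1 o2).
Qed.

Lemma tri_gen_cover (T : {set {set 'I_n}}) y D : is_triangulation p T -> gen y ->
  in_open_simplex p D y -> exists2 D', D' \in T & in_open_simplex p D' y.
Proof.
move=> [H1 _ _ _ H5] g o.
have [D' TD' hD'] := (proj1 (H5 y)) (hull_T (open_hull o)).
exists D' => //.
have [u [v [x [uv xu xv ED]]]] := tri_all (proj1 (H1 _ TD')).
rewrite ED in hD' *; apply: gen_open => //; by rewrite eq_sym.
Qed.

Section OneFlip.
Variables (T T' : {set {set 'I_n}}) (a b c d : 'I_n).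
Hypotheses (ab : a != b) (cd : c != d) (ca : c != a) (cb : c != b) (da : d != a) (db : d != b).
Hypothesis ET : T' = ((T :\ [set a; b; c]) :\ [set a; b; d]) :|: [set [set a; c; d]; [set b; c; d]].

Lemma fl_removed X : X \in T -> X \notin T' -> X = [set a; b; c] \/ X = [set a; b; d].
Proof.
move=> XT H; case: (eqVneq X [set a; b; c]) => [->|h1]; first by left.
case: (eqVneq X [set a; b; d]) => [->|h2]; first by right.
by move: H; rewrite ET !inE h1 h2 XT.
Qed.

Lemma fl_new X : X \in T' -> X \notin T -> X = [set a; c; d] \/ X = [set b; c; d].
Proof.
rewrite ET !inE => /orP[/andP[_ /andP[_ ->]] //|/orP[]/eqP->] _; by [left|right].
Qed.

Lemma fl_ab X : X \in T' -> a \in X -> b \in X ->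
  [/\ X \in T, X != [set a; b; c] & X != [set a; b; d]].
Proof.
rewrite ET !inE => /orP[/andP[h1 /andP[h2 h3]] //|/orP[]/eqP-> aX bX].
- by move: bX; rewrite !inE eq_sym (negbTE ab) eq_sym (negbTE cb) eq_sym (negbTE db).
- by move: aX; rewrite !inE (negbTE ab) eq_sym (negbTE ca) eq_sym (negbTE da).
Qed.

End OneFlip.

End Geo.

Section Main.
Variables (R : realType) (n : nat) (p : 'I_n -> 'rV[R]_2).
Hypothesis Hp : injective p.
Variables (F : seq (flip n)) (Ts : nat -> {set {set 'I_n}}) (T0 : {set {set 'I_n}}).
Hypothesis HV : valid_seq p T0 F Ts.
Variable i : 'I_(size F).
Local Notation N := (size F).
Local Notation fl t := (nth (dflip n) F t).

Lemma triT t : (t <= N)%N -> is_triangulation p (Ts t).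
Proof. by case: HV => _ H _; apply: H. Qed.

Lemma flipinfo t : (t < N)%N -> exists a b c d : 'I_n,
  [/\ a != b, c != d, c != a, c != b & [/\ d != a, d != b,
   eps (fl t) = [set a; b], phi (fl t) = [set c; d] &
   [/\ [set a; b; c] \in Ts t, [set a; b; d] \in Ts t &
   Ts t.+1 = ((Ts t :\ [set a; b; c]) :\ [set a; b; d]) :|: [set [set a; c; d]; [set b; c; d]]]]].
Proof.
move=> tN; case: HV => _ _ H; have [a [b [c [d [[ab cd ea pc] [[ci di Tc Td] [_ ET]]]]]]] := H _ tN.
move: ci di; rewrite !inE !negb_or => /andP[ca cb] /andP[da db].
by exists a, b, c, d.
Qed.

Lemma eps_gone t X : (t < N)%N -> X \in Ts t.+1 -> eps (fl t) \subset X -> False.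
Proof.
move=> tN XT; have [a [b [c [d [ab cd ca cb [da db ea pc [Tc Td ET]]]]]]] := flipinfo tN.
rewrite ea => /subsetP sub.
have aX : a \in X by apply: sub; rewrite !inE eqxx.
have bX : b \in X by apply: sub; rewrite !inE eqxx orbT.
have [XT0 n1 n2] := fl_ab ab ca cb da db ET XT aX bX.
case: (edge_two Hp (triT (ltnW tN)) ab cd ca cb da db Tc Td XT0 aX bX) => e.
  by rewrite e eqxx in n1.
by rewrite e eqxx in n2.
Qed.

Lemma card_eps t : (t < N)%N -> #|eps (fl t)| = 2%N.
Proof.
by move=> tN; have [a [b [c [d [ab cd ca cb [da db ea pc _]]]]]] := flipinfo tN; rewrite ea cards2 ab.
Qed.

Lemma card_phi t : (t < N)%N -> #|phi (fl t)| = 2%N.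
Proof.
by move=> tN; have [a [b [c [d [ab cd ca cb [da db ea pc _]]]]]] := flipinfo tN; rewrite pc cards2 cd.
Qed.

Definition reach (r : 'I_N) := exists s, path (adj F Ts) i s /\ last i s = r.

Lemma reach_step (r b : 'I_N) : reach r -> adj F Ts r b -> reach b.
Proof.
case=> s [ps ls] rb; exists (rcons s b).
by rewrite rcons_path ps ls rb last_rcons.
Qed.

Definition Good t (D : {set 'I_n}) := D \in Ts t /\ exists r : 'I_N,
  [/\ reach r, (r < t)%N, phi (fl r) \subset D &
      forall q : 'I_N, (r < q < t)%N -> eps (fl q) != phi (fl r)].

Lemma good_removed (t : 'I_N) D : Good t D -> D \notin Ts t.+1 -> reach t.
Proof.
case=> DT [r [rr rt pr nq]] DT1.
have tN := ltn_ord t.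
have [a [b [c [d [ab cd ca cb [da db ea pc [Tc Td ET]]]]]]] := flipinfo tN.
have eD : eps (fl t) \subset D.
  rewrite ea; case: (fl_removed ET DT DT1) => ->;
    by apply/subsetP => w; rewrite !inE => ->.
apply: (reach_step rr); rewrite /adj rt /=; apply/andP; split.
  case: (eqVneq (phi (fl r)) (eps (fl t))) => [e|ne]; first by apply/orP; left; apply/eqP.
  rewrite /share_triangle ne card_phi ?card_eps //=.
  by apply/existsP; exists D; rewrite DT pr eD.
apply/forallP => q; apply/negP => /andP[qq /eqP e].
by move: (nq q qq); rewrite e eqxx.
Qed.

Lemma good_new (t : 'I_N) D : reach t -> D \in Ts t.+1 -> phi (fl t) \subset D ->
  Good t.+1 D.
Proof.
move=> rt DT pD; split => //; exists t; split => // q /andP[h1 h2].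
by move: (leq_ltn_trans h1 h2); rewrite ltnn.
Qed.

Lemma persist t D : (t < N)%N -> Good t D -> D \in Ts t.+1 -> Good t.+1 D.
Proof.
move=> tN [DT [r [rr rt pr nq]]] DT1; split => //; exists r; split => //.
  exact: ltnW.
move=> q /andP[h1 h2]; rewrite ltnS leq_eqVlt in h2.
case/orP: h2 => [/eqP qt|h2]; last by apply: nq; rewrite h1 h2.
apply/eqP => e; apply: (eps_gone tN DT1); by rewrite -qt e.
Qed.

Definition Pgood y t := forall D, D \in Ts t -> in_open_simplex p D y -> Good t D.

Lemma CI y t0 t : gen p y -> (t0 <= t)%N -> (t <= N)%N -> Pgood y t0 -> Pgood y t.
Proof.
move=> g; elim: t => [|t IH] h1 h2 P0.
  by rewrite leqn0 in h1; move/eqP: h1 => <-.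
case: (eqVneq t0 t.+1) => [e|ne]; first by rewrite -e.
have Pt : Pgood y t.
  by apply: IH => //; [rewrite -ltnS ltn_neqAle ne h1 | exact: ltnW].
move=> D' D'T o'.
have tN : (t < N)%N by [].
have [D DT oD] := tri_gen_cover (triT (ltnW tN)) g o'.
have GD := Pt D DT oD.
case: (boolP (D \in Ts t.+1)) => DT1.
  have e : D = D' := tri_uniq (triT tN) DT1 D'T oD o'.
  by rewrite -e; apply: persist.
have rt := good_removed (t := Ordinal tN) GD DT1.
case: (boolP (D' \in Ts t)) => D'T0.
  have e := tri_uniq (triT (ltnW tN)) D'T0 DT o' oD.
  by rewrite e (negbTE DT1) in D'T.
have [a [b [c [d [ab cd ca cb [da db ea pc [Tc Td ET]]]]]]] := flipinfo tN.
apply: (good_new rt D'T); rewrite pc.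
by case: (fl_new ET D'T D'T0) => ->; apply/subsetP => w; rewrite !inE => /orP[]/eqP->; rewrite eqxx ?orbT.
Qed.


Lemma sub_cd (c d x : 'I_n) : [set c; d] \subset [set c; d; x].
Proof. by apply/subsetP => w; rewrite !inE => /orP[]/eqP->; rewrite eqxx ?orbT. Qed.

Lemma main_reach (h : 'I_N) : (i < h)%N ->
  (phi (fl i) = eps (fl h) \/ exists j, (i < j <= h)%N /\
      share_triangle (Ts j) (phi (fl i)) (eps (fl h))) -> reach h.
Proof.
move=> ih Hc.
have iN := ltn_ord i; have hN := ltn_ord h.
have [a [b [c [d [ab cd ca cb [da db ea pc [Tc Td ET]]]]]]] := flipinfo iN.
have [a' [b' [c' [d' [ab' cd' ca' cb' [da' db' ea' pc' [Tc' Td' ET']]]]]]] := flipinfo hN.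
have n1T : [set c; d; a] \in Ts i.+1 by rewrite ET -(set3C1 a c d) !inE eqxx !orbT.
have n2T : [set c; d; b] \in Ts i.+1 by rewrite ET -(set3C1 b c d) !inE eqxx !orbT.
have ri : reach i by exists [::].
have start : forall y, in_open_simplex p [set c; d; a] y \/
    in_open_simplex p [set c; d; b] y -> Pgood y i.+1.
  move=> y o D DT oD; case: o => o.
    rewrite (tri_uniq (triT iN) DT n1T oD o).
    by apply: (good_new (t := i)) => //; rewrite pc sub_cd.
  rewrite (tri_uniq (triT iN) DT n2T oD o).
  by apply: (good_new (t := i)) => //; rewrite pc sub_cd.
have fin : forall y, Pgood y h -> in_open_simplex p [set a'; b'; c'] y \/
    in_open_simplex p [set a'; b'; d'] y -> reach h.
  have aX : forall x : 'I_n, a' \in [set a'; b'; x] by move=> x; rewrite !inE eqxx.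
  have bX : forall x : 'I_n, b' \in [set a'; b'; x] by move=> x; rewrite !inE eqxx orbT.
  move=> y P [] o.
    apply: (good_removed (P _ Tc' o)); apply/negP => H.
    have [_ n1 _] := fl_ab ab' ca' cb' da' db' ET' H (aX c') (bX c').
    by rewrite eqxx in n1.
  apply: (good_removed (P _ Td' o)); apply/negP => H.
  have [_ _ n2] := fl_ab ab' ca' cb' da' db' ET' H (aX d') (bX d').
  by rewrite eqxx in n2.
have ac : a != c by rewrite eq_sym.
have ad : a != d by rewrite eq_sym.
have bc : b != c by rewrite eq_sym.
have bd : b != d by rewrite eq_sym.
case: Hc => [E|[j [/andP[ij jh] sh]]].
- rewrite pc ea' in E.
  have : c' \notin [set c; d] by rewrite E !inE negb_or ca' cb'.
  rewrite !inE negb_or => /andP[c'c c'd].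
  have E3 : [set a'; b'; c'] = [set c; d; c'] by rewrite -E.
  have sz : sd p c d c' != 0%R.
    apply: aff_sd => //; rewrite -E3.
    by have [H1 _ _ _ _] := triT (ltnW hN); case: (H1 _ Tc').
  have [y [g oz o12]] := pick_point Hp (triT iN) cd ab ac ad bc bd c'c c'd n1T n2T sz.
  apply: (fin y); last by left; rewrite E3.
  by apply: (CI g (t0 := i.+1)) => //; [exact: ltnW | apply: start].
- have jN : (j <= N)%N by apply: (leq_trans jh); exact: ltnW.
  move: sh; rewrite /share_triangle => /and4P[_ _ _ /existsP[T /andP[TT /andP[s1 s2]]]].
  have [H1 _ _ _ _] := triT jN.
  have [cT3 affT] := H1 _ TT.
  rewrite pc in s1; rewrite ea' in s2.
  have cT : c \in T by apply: (subsetP s1); rewrite !inE eqxx.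
  have dT : d \in T by apply: (subsetP s1); rewrite !inE eqxx orbT.
  have a'T : a' \in T by apply: (subsetP s2); rewrite !inE eqxx.
  have b'T : b' \in T by apply: (subsetP s2); rewrite !inE eqxx orbT.
  have [z [zc zd ETz]] := tri3 cT3 cT dT cd.
  have sz : sd p c d z != 0%R by apply: aff_sd => //; rewrite -ETz.
  have [y1 [g1 o1 o12]] := pick_point Hp (triT iN) cd ab ac ad bc bd zc zd n1T n2T sz.
  rewrite -ETz in o1.
  have P1 : Pgood y1 j by apply: (CI g1 (t0 := i.+1)) => //; apply: start.
  have GT := P1 T TT o1.
  have [z' [za' zb' ETz']] := tri3 cT3 a'T b'T ab'.
  have sz' : sd p a' b' z' != 0%R by apply: aff_sd => //; rewrite -ETz'.
  have [y2 [g2 o2 o2h]] := pick_point Hp (triT (ltnW hN)) ab' cd' ca' cb' da' db' za' zb' Tc' Td' sz'.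
  rewrite -ETz' in o2.
  apply: (fin y2) => //; apply: (CI g2 (t0 := j)) => //; first exact: ltnW.
  move=> D DT oD; by rewrite (tri_uniq (triT jN) DT TT oD o2).
Qed.

End Main.

Lemma path_in_C (n : nat) (F : seq (flip n)) (Ts : nat -> {set {set 'I_n}})
  (C : {set 'I_(size F)}) (HC : is_component F Ts C) (s : seq 'I_(size F)) :
  forall a, a \in C -> path (adj F Ts) a s -> all (fun x => x \in C) s.
Proof.
case: HC => x0 EC; elim: s => //= x s IH a aC /andP[ax ps].
have xC : x \in C.
  move: aC; rewrite EC !inE => aC; apply: (connect_trans aC); apply: connect1.
  by rewrite /wadj ax.
by rewrite xC (IH x xC ps).
Qed.

Unset Implicit Arguments.

Theorem lemma6 (R : realType) (n : nat) (p : 'I_n -> 'rV[R]_2)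
  (Hp : injective p)
  (Tinit Tfinal : {set {set 'I_n}}) (k : nat)
  (F : seq (flip n)) (Ts : nat -> {set {set 'I_n}})
  (HF : normalized_solution p Tinit Tfinal k F Ts)
  (C : {set 'I_(size F)}) (HC : is_component F Ts C)
  (i h : 'I_(size F)) (Hi : i \in C) (Hh : h \in C) (Hih : (i < h)%N)
  (Hcond : phi (nth (dflip n) F i) = eps (nth (dflip n) F h) \/
           exists j, (i < j <= h)%N /\
             share_triangle (Ts j) (phi (nth (dflip n) F i))
                                   (eps (nth (dflip n) F h))) :
  exists s : seq 'I_(size F),
    [/\ path (adj F Ts) i s, last i s = h & all (fun x => x \in C) s].
Proof.
have HV : valid_seq p Tinit F Ts by case: HF => [[]].
have [s [ps ls]] := main_reach Hp HV Hih Hcond.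
exists s; split => //.
exact: (path_in_C HC Hi ps).
Qed.
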